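(* For every prime $p$ there exist $\varepsilon(p),\delta(p)\in(0,\infty)$ such that the following holds. Let $n\geq p^2$ be an integer and let $\varepsilon<\varepsilon(p)$. Then every $(C,\mathbf 1,\mathbb{F}_p^n,\varepsilon)$-arithmetic expander, where $C$ is the $p$-term arithmetic progression matrix, has size at least $\delta(p)\,n^{p-1}$. Concretely: if $D\subseteq\mathbb{F}_p^n$ is a multiset with $\lambda_{L_{\mathbb{F}_p^n}}(L_D)\leq\varepsilon$, then $|D|\geq\delta(p)\,n^{p-1}$ (with $|D|$ counted with multiplicity).
   Context: For a $t$-linear form $A$ on $\mathbb{R}^V$ and $r\in[1,\infty]$ let $\|A\|_{\ell_r,\dots,\ell_r}=\sup\{A(x[1],\dots,x[t])/(\|x[1]\|_{\ell_r}\cdots\|x[t]\|_{\ell_r}) : x[1],\dots,x[t]\in\mathbb{R}^V\setminus\{0\}\}$. For a nonempty multiset $D\subseteq\mathbb{F}_p^n$, let $L_D$ be the $p$-uniform hypergraph on vertex set $\mathbb{F}_p^n$ in which the multiplicity of the edge $\{u_1,\dots,u_p\}$ is $e_{L_D}(u_1,\dots,u_p)=\sum_{y\in D}\sum_{x\in\mathbb{F}_p^n}\sum_{\sigma\in S_p}\prod_{i=1}^p 1[u_i=x+(\sigma(i)-1)y]$ (sum over $D$ with multiplicity, $S_p$ the permutations of $\{1,\dots,p\}$). Its normalized adjacency form $A_{L_D}$ is the $p$-linear form on $\mathbb{R}^{\mathbb{F}_p^n}$ determined by $A_{L_D}(1_{\{u_1\}},\dots,1_{\{u_p\}})=e_{L_D}(u_1,\dots,u_p)/(p!\,|D|)$.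 For hypergraphs $H,K$ of this type set $\lambda_K(H)=\|A_H-A_K\|_{\ell_p,\dots,\ell_p}$. $L_{\mathbb{F}_p^n}$ denotes $L_D$ with $D=\mathbb{F}_p^n$ (every element once). The AP matrix $C\in\mathbb{Z}^{(p-2)\times p}$ has rows $(0,\dots,0,1,-2,1,0,\dots,0)$; its solution set in $(\mathbb{F}_p^n)^p$ consists of the $p$-term progressions $(x,x+y,\dots,x+(p-1)y)$, which are the cosets of the diagonal $\{(u,\dots,u)\}$ with representatives $(0,y,2y,\dots,(p-1)y)$; a $(C,\mathbf 1,\mathbb{F}_p^n,\varepsilon)$-arithmetic expander is a multiset of such representatives, i.e. indexed by a multiset $D$ of steps $y$, such that $\lambda_{L_{\mathbb{F}_p^n}}(L_D)\leq\varepsilon$; its size is $|D|$. *)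

(* Defs.v *)
From HB Require Import structures.
From mathcomp Require Import all_boot all_order all_algebra all_fingroup.
From mathcomp Require Import all_classical all_reals all_analysis.
Set Implicit Arguments. Unset Strict Implicit. Unset Printing Implicit Defensive.
Import Order.TTheory GRing.Theory Num.Theory.
Local Open Scope ring_scope.

Section Defs.
Variable R : realType.
Variables p n : nat.
Local Notation V := 'rV['F_p]_n.

(* A multiset D of elements of F_p^n, given by its multiplicity function;
   |D| counts multiplicity. *)
Definition ms_card (D : {ffun V -> nat}) : nat := (\sum_(y : V) D y)%N.

(* e_{L_D}(u_1,...,u_p), indices shifted to 'I_p = {0,...,p-1}, so that
   sigma(i)-1 becomes the value of sigma i. *)
Definition edge_mult (D : {ffun V -> nat}) (u : {ffun 'I_p -> V}) : nat :=
  (\sum_(y : V) D y * \sum_(x : V) \sum_(s : 'S_p)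
       \prod_(i < p) nat_of_bool (u i == (x + y *+ (s i : nat))%R))%N.

Definition AL (D : {ffun V -> nat}) (xs : 'I_p -> {ffun V -> R}) : R :=
  \sum_(u : {ffun 'I_p -> V})
     ((edge_mult D u)%:R / ((p`!)%:R * (ms_card D)%:R)) * \prod_(i < p) xs i (u i).

Definition lr_norm (r : R) (x : {ffun V -> R}) : R :=
  (\sum_(v : V) `|x v| `^ r) `^ (r^-1).

Definition lambdaK (K H : {ffun V -> nat}) : \bar R :=
  ereal_sup [set ((AL H xs - AL K xs) / \prod_(i < p) lr_norm p%:R (xs i))%:E
            | xs in [set xs : 'I_p -> {ffun V -> R} | forall i, xs i != 0]]%classic.

Definition full_ms : {ffun V -> nat} := [ffun => 1%N].
End Defs.

(* Main.v *)
Require Import Defs.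
From HB Require Import structures.
From mathcomp Require Import all_boot all_order all_algebra all_fingroup.
From mathcomp Require Import all_classical all_reals all_analysis.
From mathcomp Require Import all_field.
From mathcomp Require Import zify ring lra.
Set Implicit Arguments. Unset Strict Implicit. Unset Printing Implicit Defensive.
Import Order.TTheory GRing.Theory Num.Theory.
Local Open Scope ring_scope.

Section D.
Variable F : finFieldType.
Variable n : nat.
Local Notation V := 'rV[F]_n.

Definition ee (s : 'I_n) : V := delta_mx 0 s.

Fixpoint Dl (L : seq 'I_n) (f : V -> F) (y : V) : F :=
  match L with [::] => f y | s :: L' => Dl L' f (y + ee s) - Dl L' f y end.

Fixpoint boxpts (L : seq 'I_n) : seq V :=
  match L with [::] => [:: 0] | s :: L' => boxpts L' ++ map (fun w => w + ee s) (boxpts L') end.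

Lemma size_boxpts L : size (boxpts L) = (2 ^ size L)%N.
Proof. elim: L => //= s L IH; rewrite size_cat size_map IH expnS; lia. Qed.

Lemma Dl_box L f y : (forall w, w \in boxpts L -> f (y + w) = 0) -> Dl L f y = 0.
Proof.
elim: L y => [|s L IH] y /= H; first by rewrite -[y]addr0 H // mem_seq1.
rewrite IH ?IH ?subrr // => w wB.
- by apply: H; rewrite mem_cat wB.
- rewrite -addrA [ee s + w]addrC; apply: H.
  by rewrite mem_cat; apply/orP; right; apply: map_f.
Qed.

Lemma Dl_ext L f g y : (forall z, f z = g z) -> Dl L f y = Dl L g y.
Proof. by move=> fg; elim: L y => [|s L IH] y /=; rewrite ?fg ?IH. Qed.

Lemma Dl_lin (K : finType) (c : K -> F) (g : K -> V -> F) L y :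
  Dl L (fun z => \sum_k c k * g k z) y = \sum_k c k * Dl L (g k) y.
Proof.
elim: L y => [|s L IH] y //=.
by rewrite !IH -sumrB; apply: eq_bigr => k _; rewrite mulrBr.
Qed.

Lemma Dl_mono (A L : seq 'I_n) y : uniq A -> uniq L ->
  Dl L (fun z => \prod_(a <- A) z 0 a) y =
  if all (fun s => s \in A) L then \prod_(a <- A | a \notin L) y 0 a else 0.
Proof.
move=> uA; elim: L y => [|s L IH] y /=.
  by move=> _; apply: eq_bigl => a.

case/andP => sL uL; rewrite !IH //.
case hL: (all _ L); last by rewrite andbF subrr.
rewrite andbT.
have ee_ne : forall a, a != s -> (y + ee s) 0 a = y 0 a.
  by move=> a /negbTE h; rewrite /ee !mxE h andbF addr0.
case hs: (s \in A).
  rewrite -[X in X - _]big_filter -[X in _ - X]big_filter.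
  have sA' : s \in seq.filter (fun a => a \notin L) A by rewrite mem_filter sL hs.
  have uA' : uniq (seq.filter (fun a => a \notin L) A) by apply: filter_uniq.
  rewrite !(bigD1_seq s sA' uA') /=.
  rewrite (eq_bigr (fun a => y 0 a)); last by move=> a; apply: ee_ne.
  rewrite /ee !mxE !eqxx /= -mulrBl addrAC subrr add0r mul1r.
  rewrite big_filter_cond; apply: eq_bigl => a.
  by rewrite in_cons negb_or andbC.
apply/eqP; rewrite subr_eq0; apply/eqP; rewrite big_seq_cond [RHS]big_seq_cond.
apply: eq_bigr => a /andP[aA _]; apply: ee_ne.
by apply: contraTneq aA => ->; rewrite hs.
Qed.

Lemma count_nonzero (L : seq 'I_n) (f : V -> F) :
  (forall y, Dl L f y != 0) ->
  (#|V| <= 2 ^ size L * \sum_(z : V) (f z != 0%R))%N.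
Proof.
move=> H.
have step : (\sum_(y : V) 1 <= \sum_(y : V) \sum_(w <- boxpts L) (f (y + w)%R != 0%R))%N.
  apply: leq_sum => y _; rewrite lt0n; apply: contra (H y) => /eqP h0.
  apply/eqP; apply: Dl_box => w wB.
  have := h0; move/eqP; rewrite sum_nat_seq_eq0 => /allP /(_ w wB) /=.
  by rewrite eqb0 negbK => /eqP.
rewrite sum1_card in step; apply: (leq_trans step).
rewrite exchange_big /=.
rewrite (eq_bigr (fun _ => (\sum_(z : V) (f z != 0%R))%N)); last first.
  by move=> w _; rewrite [RHS](reindex_inj (addIr w)).
by rewrite big_const_seq count_predT iter_addn_0 size_boxpts mulnC.
Qed.
End D.

Section PS.
Variable p : nat.
Hypothesis pp : prime p.
Local Notation F := 'F_p.

Lemma cardF : #|F| = p. Proof. exact: card_Fp. Qed.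

Lemma psum_top : \sum_(x : F) x ^+ p.-1 = -1.
Proof.
have p1 : (1 < p)%N by apply: prime_gt1.
rewrite (bigD1 0) //= expr0n.
have -> : (p.-1 == 0%N) = false by apply/eqP; lia.
rewrite add0r.
rewrite (eq_bigr (fun _ => 1)); last first.
  move=> x x0; have h := expf_card x; rewrite cardF in h.
  have : x ^+ p.-1.+1 = x by rewrite prednK // ltnW.
  by move=> h2; apply: (mulfI x0); rewrite mulr1 -exprS.
have -> : \sum_(i : F | i != 0) (1 : F) = #|[pred i : F | i != 0]|%:R.
  by rewrite -sumr_const.
have -> : #|[pred i : F | i != 0]| = p.-1.
  by rewrite cardC1 cardF.
by apply/eqP; rewrite -subr_eq0 opprK natr1 prednK ?(pchar_Fp_0 pp) // ltnW.
Qed.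

Lemma psum_low k : (k < p.-1)%N -> \sum_(x : F) x ^+ k = 0.
Proof.
move=> kp.
have p1 : (1 < p)%N by apply: prime_gt1.
case: k kp => [|k] kp.
  under eq_bigr do rewrite expr0.
  by rewrite sumr_const cardE -cardE cardF (pchar_Fp_0 pp).
have [a a0 ak] : exists2 a : F, a != 0 & a ^+ k.+1 != 1.
  have [a /andP[a0 ak]|H] := pickP (fun a : F => (a != 0) && (a ^+ k.+1 != 1)).
    by exists a.
  exfalso.
  have : (size (enum (predC1 (0%R : F))) < size (('X^(k.+1) - 1)%R : {poly F}))%N.
    apply: max_poly_roots.
    - by rewrite -size_poly_eq0 size_Xn_sub_1.
    - apply/allP => a; rewrite mem_enum /= => a0; have := H a; rewrite /= (a0 : a != 0) /= => /negbFE/eqP ak.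
      by rewrite rootE !hornerE ak subrr.
    - exact: enum_uniq.
  rewrite size_Xn_sub_1 // -cardE cardC1 cardF. lia.
set S := \sum_(x : F) x ^+ k.+1.
have : S = a ^+ k.+1 * S.
  rewrite /S mulr_sumr (reindex_inj (mulfI a0)).
  by apply: eq_bigr => x _; rewrite exprMn.
move/eqP; rewrite -subr_eq0 -{1}[S]mul1r -mulrBl mulf_eq0 subr_eq0 eq_sym (negbTE ak) /=.
by move/eqP.
Qed.
Lemma affsum (al be : 'I_p.-1 -> F) :
  \sum_(x : F) \prod_(i < p.-1) (al i + x * be i) = - \prod_i be i.
Proof.
rewrite (eq_bigr (fun x : F => \prod_i (x * be i + al i))); last first.
  by move=> x _; apply: eq_bigr => i _; rewrite addrC.
under eq_bigr => x _ do rewrite bigA_distr.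
rewrite exchange_big /=.
have E : forall J : {set 'I_p.-1}, forall x : F,
  \prod_i (if i \in J then x * be i else al i) =
  x ^+ #|J| * ((\prod_(i in J) be i) * \prod_(i in ~: J) al i).
  move=> J x; rewrite (bigID (mem J)) /= mulrA; congr (_ * _).
    rewrite (eq_bigr (fun i => x * be i)); last by move=> i ->.
    by rewrite big_split /= prodr_const.
  by apply: eq_big => [i|i /negbTE ->//]; rewrite inE.
under eq_bigr do under eq_bigr do rewrite E.
under eq_bigr do rewrite -mulr_suml.
rewrite (bigD1 (setTfor 'I_p.-1)) //= [X in _ + X]big1 ?addr0.
  rewrite cardsT card_ord psum_top mulN1r; congr (- _).
  rewrite finset.setCT big_set0 mulr1.
  by apply: eq_bigl => i; rewrite inE.
move=> J JT.
rewrite psum_low ?mul0r //.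
have hJ := max_card J; rewrite card_ord in hJ; rewrite ltn_neqAle hJ andbT.
apply: contra JT => /eqP h.
by rewrite eqEcard finset.subsetT h /= cardsT card_ord.
Qed.
Lemma sum_Ip_F (g : F -> F) : \sum_(j < p) g ((j : nat)%:R) = \sum_(z : F) g z.
Proof.
have hinj : injective (fun j : 'I_p => ((j : nat)%:R : F)).
  move=> j j' /(congr1 val) /=; rewrite !(val_Fp_nat pp) !modn_small //.
  by move/val_inj.
have hb := inj_card_bij hinj; rewrite card_Fp // card_ord in hb.
by rewrite (reindex _ (onW_bij _ (hb (leqnn p)))).
Qed.

Variable n : nat.
Local Notation V := 'rV[F]_n.
Local Notation r := p.-1.
Local Notation m := (n %/ p.-1)%N.

Lemma coord_lt (i : 'I_r) (j : 'I_m) : (i * m + j < n)%N.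
Proof.
have h1 : (m * r <= n)%N := leq_trunc_div n r.
have h2 := ltn_ord i; have h3 := ltn_ord j.
nia.
Qed.

Definition coordn (i : 'I_r) (j : 'I_m) : 'I_n := Ordinal (coord_lt i j).

Lemma coordn_inj i j i' j' : coordn i j = coordn i' j' -> i = i' /\ j = j'.
Proof.
move/(congr1 val) => /= h.
have h2 := ltn_ord j; have h3 := ltn_ord j'.
have hi : (i : nat) = i' by nia.
split; apply: val_inj => //=; nia.
Qed.

Definition Kt := {ffun 'I_r -> 'I_m}.

Definition Qf (c : {ffun Kt -> F}) (v : V) : F :=
  \sum_(k : Kt) c k * \prod_(i < r) v 0 (coordn i (k i)).

Lemma Q_AP c x y : \sum_(j < p) Qf c (x + y *+ j) = - Qf c y.
Proof.
rewrite /Qf exchange_big -sumrN; apply: eq_bigr => k _.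
rewrite -mulr_sumr -mulrN; congr (_ * _).
rewrite -(affsum (fun i => x 0 (coordn i (k i))) (fun i => y 0 (coordn i (k i)))).
rewrite -(sum_Ip_F (fun z => \prod_(i < r) (x 0 (coordn i (k i)) + z * y 0 (coordn i (k i))))).
apply: eq_bigr => j _; apply: eq_bigr => i _.
by rewrite !mxE mulmxnE mulr_natl.
Qed.

Definition Ak (k : Kt) : seq 'I_n := [seq coordn i (k i) | i <- enum 'I_r].

Lemma Ak_uniq k : uniq (Ak k).
Proof.
rewrite map_inj_uniq ?enum_uniq // => i i' /coordn_inj [] //.
Qed.

Lemma all_Ak k k0 : all (fun s => s \in Ak k) (Ak k0) -> k = k0.
Proof.
move/allP => H; apply/ffunP => i.
have : coordn i (k0 i) \in Ak k0 by apply: map_f; rewrite mem_enum.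
move/H => /mapP [i' _ e].
by have [e1 e2] := coordn_inj e; subst i'.
Qed.

Lemma Dl_Q (c : {ffun Kt -> F}) k0 y : Dl (Ak k0) (Qf c) y = c k0.
Proof.
have -> : Dl (Ak k0) (Qf c) y =
   \sum_k c k * Dl (Ak k0) (fun z => \prod_(a <- Ak k) z 0 a) y.
  rewrite -Dl_lin; apply: Dl_ext => z; rewrite /Qf; apply: eq_bigr => k _.
  by rewrite big_map big_enum.
rewrite (bigD1 k0) //= big1 ?addr0.
  rewrite Dl_mono ?Ak_uniq //.
  have -> : all (fun s => s \in Ak k0) (Ak k0) by apply/allP.
  rewrite big_seq_cond big1 ?mulr1 // => a /andP [h1 h2].
  by rewrite h1 in h2.
move=> k kk0; rewrite Dl_mono ?Ak_uniq //.
case: ifP => [/all_Ak e|]; last by rewrite mulr0.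
by rewrite e eqxx in kk0.
Qed.

Lemma exists_c (S : {set V}) : (#|S| < #|Kt|)%N ->
  exists c : {ffun Kt -> F}, (exists k0, c k0 != 0) /\ forall y, y \in S -> Qf c y = 0.
Proof.
move=> hS.
pose f := fun c : {ffun Kt -> F} => [ffun i : 'I_#|S| => Qf c (enum_val i)].
have : ~~ injectiveb f.
  apply/negP => /injectiveP inj; have := leq_card f inj.
  have e1 : #|{ffun Kt -> F}| = (#|F| ^ #|Kt|)%N := card_ffun _ _.
  have e2 : #|{ffun 'I_#|S| -> F}| = (#|F| ^ #|S|)%N.
    by rewrite card_ffun; congr (_ ^ _)%N; exact: card_ord.
  rewrite e1 e2 cardF leq_exp2l ?prime_gt1 //.
  by rewrite leqNgt hS.
case/injectivePn => c1 [c2 neq eqf].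
exists [ffun k => c1 k - c2 k]; split.
  have : [exists k, c1 k != c2 k].
    apply: contraR neq => /existsPn h; apply/eqP/ffunP => k; apply/eqP.
    by move: (h k); rewrite negbK.
  by case/existsP => k hk; exists k; rewrite ffunE subr_eq0.
move=> y yS.
have : f c1 (enum_rank_in yS y) = f c2 (enum_rank_in yS y) by rewrite eqf.
rewrite /f !ffunE enum_rankK_in // => h.
rewrite /Qf; under eq_bigr do rewrite ffunE mulrBl.
by rewrite sumrB -/(Qf c1 y) -/(Qf c2 y) h subrr.
Qed.

End PS.

Section A.
Variable R : realType.
Variable p : nat.
Hypothesis pp : prime p.
Variable n : nat.
Local Notation F := 'F_p.
Local Notation V := 'rV[F]_n.

Lemma sum_delta (w : 'I_p -> V) (G : {ffun 'I_p -> V} -> R) :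
  \sum_(u : {ffun 'I_p -> V}) (\prod_(i < p) ((u i == w i) : nat)%:R) * G u
  = G [ffun i => w i].
Proof.
rewrite (bigD1 [ffun i => w i]) //= [X in _ + X]big1 ?addr0.
  by rewrite big1 ?mul1r // => i _; rewrite ffunE eqxx.
move=> u uw.
have : [exists i, u i != w i].
  apply: contraR uw => /existsPn h; apply/eqP/ffunP => i; rewrite ffunE; apply/eqP.
  by move: (h i); rewrite negbK.
case/existsP => i hi.
by rewrite (bigD1 i) //= (negbTE hi) !mul0r.
Qed.

Lemma AL_E (D : {ffun V -> nat}) (xs : 'I_p -> {ffun V -> R}) :
  AL D xs = ((p`!)%:R * (ms_card D)%:R)^-1 *
    \sum_(y : V) (D y)%:R * \sum_(x : V) \sum_(s : 'S_p)
        \prod_(i < p) xs i (x + y *+ (s i : nat)).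
Proof.
rewrite /AL.
set K := ((p`!)%:R * (ms_card D)%:R).
transitivity (K^-1 * \sum_u (edge_mult D u)%:R * \prod_(i < p) xs i (u i)).
  rewrite mulr_sumr; apply: eq_bigr => u _; rewrite mulrA [K^-1 * _]mulrC //.
congr (_ * _).
rewrite /edge_mult.
under eq_bigr => u _ do rewrite natr_sum mulr_suml.
rewrite exchange_big /=; apply: eq_bigr => y _.
under eq_bigr => u _ do rewrite natrM -mulrA.
rewrite -mulr_sumr; congr (_ * _).
rewrite [LHS](eq_bigr (fun u : {ffun 'I_p -> V} => \sum_(x : V) ((\sum_(s : 'S_p) \prod_(i0 < p) (u i0 == (x + y *+ s i0)%R : nat))%N%:R * \prod_(i0 < p) xs i0 (u i0)))); last first.
  by move=> u _; rewrite natr_sum mulr_suml.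
rewrite exchange_big /=; apply: eq_bigr => x _.
under eq_bigr => u _ do rewrite natr_sum mulr_suml.
rewrite exchange_big /=; apply: eq_bigr => s _.
under eq_bigr => u _ do rewrite natr_prod.
rewrite (sum_delta (fun i => x + y *+ s i) (fun u => \prod_(i < p) xs i (u i))).
by apply: eq_bigr => i _; rewrite ffunE.
Qed.

Definition ind (Q : V -> F) (a : F) : {ffun V -> R} := [ffun v => ((Q v == a) : nat)%:R].

Lemma sum_c (w : 'I_p -> V) (Q : V -> F) :
  \sum_(c : {ffun 'I_p -> F} | \sum_i c i == 0) \prod_(i < p) ind Q (c i) (w i)
  = ((\sum_i Q (w i) == 0) : nat)%:R.
Proof.
set C0 := [ffun i => Q (w i)].
rewrite (eq_bigr (fun c => ((c == C0) : nat)%:R)); last first.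
  move=> c _; case: (eqVneq c C0) => [->|ne].
    by rewrite big1 // => i _; rewrite !ffunE eqxx.
  have : [exists i, c i != C0 i].
    apply: contraR ne => /existsPn h; apply/eqP/ffunP => i; apply/eqP.
    by move: (h i); rewrite negbK.
  case/existsP => i hi; rewrite (bigD1 i) //=.
  by move: hi; rewrite !ffunE eq_sym => /negbTE ->; rewrite mul0r.
rewrite big_mkcond (bigD1 C0) //= [X in _ + X]big1 ?addr0.
  have -> : (\sum_i C0 i) = \sum_i Q (w i) by apply: eq_bigr => i _; rewrite ffunE.
  by rewrite eqxx; case: ifP.
by move=> c /negbTE ->; case: ifP.
Qed.

Lemma AL_sumc (D : {ffun V -> nat}) (Q : V -> F)
  (HQ : forall x y, \sum_(j < p) Q (x + y *+ j) = - Q y) :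
  \sum_(c : {ffun 'I_p -> F} | \sum_i c i == 0) AL D (fun i => ind Q (c i)) =
  ((p`!)%:R * (ms_card D)%:R)^-1 *
   \sum_(y : V) (D y)%:R * (#|V|%:R * (p`!)%:R * ((Q y == 0) : nat)%:R).
Proof.
under eq_bigr do rewrite AL_E.
rewrite -mulr_sumr; congr (_ * _).
rewrite exchange_big /=; apply: eq_bigr => y _.
rewrite -mulr_sumr; congr (_ * _).
rewrite exchange_big /=.
transitivity (\sum_(x : V) (p`!)%:R * ((Q y == 0) : nat)%:R : R).
  apply: eq_bigr => x _; rewrite exchange_big /=.
  transitivity (\sum_(s : 'S_p) ((Q y == 0) : nat)%:R : R).
    apply: eq_bigr => s _; rewrite sum_c.
    have -> : \sum_i Q (x + y *+ s i) = - Q y.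
      by rewrite -(HQ x y) [RHS](reindex_inj (@perm_inj _ s)).
    by rewrite oppr_eq0.
  by rewrite sumr_const card_Sn mulr_natl.
by rewrite sumr_const -[(_ * _) *+ _]mulr_natl mulrA.
Qed.

Lemma AL_zero (D : {ffun V -> nat}) (xs : 'I_p -> {ffun V -> R}) i :
  xs i = 0 -> AL D xs = 0.
Proof.
move=> h; rewrite /AL big1 // => u _.
by rewrite (bigD1 i) //= h ffunE mul0r mulr0.
Qed.
End A.

Section A2.
Variable R : realType.
Variable p : nat.
Hypothesis pp : prime p.
Variable n : nat.
Local Notation F := 'F_p.
Local Notation V := 'rV[F]_n.

Lemma pR_neq0 : (p%:R : R) != 0.
Proof. by rewrite pnatr_eq0 -lt0n prime_gt0. Qed.

Lemma pow_ind (Q : V -> F) a v : `|ind R Q a v| `^ p%:R = ind R Q a v.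
Proof.
rewrite ffunE; case: (Q v == a) => /=.
  by rewrite normr1 powR1.
by rewrite normr0 powR0 // pR_neq0.
Qed.

Lemma norm_ind_le (Q : V -> F) a :
  lr_norm p%:R (ind R Q a) <= #|V|%:R `^ (p%:R : R)^-1.
Proof.
rewrite /lr_norm.
have h1 : \sum_(v : V) `|ind R Q a v| `^ p%:R <= #|V|%:R.
  under eq_bigr do rewrite pow_ind.
  rewrite -sumr_const; apply: ler_sum => v _; rewrite ffunE.
  by case: (_ == _).
have h0 : 0 <= \sum_(v : V) `|ind R Q a v| `^ p%:R.
  by apply: sumr_ge0 => v _; rewrite powR_ge0.
have hp : (0 : R) <= (p%:R)^-1 by rewrite invr_ge0 ler0n.
by apply: (ge0_ler_powR hp) => //; rewrite nnegrE ?ler0n.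
Qed.
Lemma norm_ind_gt0 (Q : V -> F) a : ind R Q a != 0 ->
  0 < lr_norm p%:R (ind R Q a).
Proof.
move=> nz; rewrite /lr_norm; apply: powR_gt0.
under eq_bigr do rewrite pow_ind.
have [v hv] : exists v, ind R Q a v != 0.
  have : [exists v, ind R Q a v != 0].
    apply: contraR nz => /existsPn h; apply/eqP/ffunP => v.
    by move: (h v); rewrite negbK => /eqP ->; rewrite ffunE.
  by case/existsP => v hv; exists v.
rewrite (bigD1 v) //=; apply: ltr_pwDl.
  by move: hv; rewrite ffunE; case: (Q v == a) => /=; rewrite ?ltr0n ?eqxx.
by apply: sumr_ge0 => u _; rewrite ffunE ler0n.
Qed.

Lemma prod_le (xs : 'I_p -> {ffun V -> R}) :
  (forall i, 0 <= lr_norm p%:R (xs i) <= #|V|%:R `^ (p%:R : R)^-1) ->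
  \prod_(i < p) lr_norm p%:R (xs i) <= #|V|%:R.
Proof.
move=> H; apply: (le_trans (ler_prod _ (fun i _ => H i))).
rewrite prodr_const card_ord -powR_mulrn ?powR_ge0 // -powRrM mulVf ?pR_neq0 //.
by rewrite powRr1 ?ler0n.
Qed.

Lemma lambda_ge (D : {ffun V -> nat}) (xs : 'I_p -> {ffun V -> R}) :
  (forall i, xs i != 0) ->
  (((AL D xs - AL (full_ms p n) xs) / \prod_(i < p) lr_norm p%:R (xs i))%:E
    <= @lambdaK R p n (full_ms p n) D)%E.
Proof. by move=> nz; apply: ereal_sup_ubound; exists xs. Qed.
End A2.

Section A3.
Variable R : realType.
Variable p : nat.
Hypothesis pp : prime p.
Variable n : nat.
Local Notation F := 'F_p.
Local Notation V := 'rV[F]_n.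

Lemma ms_full : ms_card (full_ms p n) = #|V|.
Proof.
rewrite /ms_card (eq_bigr (fun _ => 1%N)) ?sum1_card // => y _.
by rewrite ffunE.
Qed.

Lemma key_lemma (D : {ffun V -> nat}) (hD : (0 < ms_card D)%N) (Q : V -> F)
  (HQ : forall x y, \sum_(j < p) Q (x + y *+ j) = - Q y)
  (HS : forall y, (0 < D y)%N -> Q y = 0)
  (Hc : (#|V| <= 2 ^ p.-1 * \sum_(z : V) (Q z != 0%R))%N) :
  (((2 ^ p * p ^ p)%:R^-1 : R)%:E <= @lambdaK R p n (full_ms p n) D)%E.
Proof.
set N : R := #|V|%:R.
have N0 : 0 < N.
  by rewrite ltr0n; apply/card_gt0P; exists 0.
set N1 : R := \sum_(y : V) ((Q y != 0) : nat)%:R.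
set Z : R := \sum_(y : V) ((Q y == 0) : nat)%:R.
have NZ : Z + N1 = N.
  rewrite /Z /N1 -big_split /= (eq_bigr (fun _ => 1)) ?sumr_const //.
  by move=> y _; case: (Q y == 0); rewrite /= ?addr0 ?add0r.
have fact0 : ((p`!)%:R : R) != 0 by rewrite pnatr_eq0 -lt0n fact_gt0.
have D0 : ((ms_card D)%:R : R) != 0 by rewrite pnatr_eq0 -lt0n.
pose xs (c : {ffun 'I_p -> F}) := fun i => ind R Q (c i).
pose diff c := AL D (xs c) - AL (full_ms p n) (xs c).
have Hsum : \sum_(c : {ffun 'I_p -> F} | \sum_i c i == 0) diff c = N1.
  rewrite sumrB !AL_sumc //.
  have -> : \sum_(y : V) (D y)%:R * (#|V|%:R * (p`!)%:R * ((Q y == 0) : nat)%:R)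
            = (ms_card D)%:R * (N * (p`!)%:R) :> R.
    rewrite /ms_card natr_sum mulr_suml; apply: eq_bigr => y _.
    by case: (posnP (D y)) => [->|/HS ->]; rewrite ?mul0r ?eqxx ?mulr1.
  have -> : \sum_(y : V) ((full_ms p n) y)%:R * (#|V|%:R * (p`!)%:R * ((Q y == 0) : nat)%:R)
            = N * (p`!)%:R * Z :> R.
    by rewrite /Z mulr_sumr; apply: eq_bigr => y _; rewrite ffunE mul1r.
  rewrite ms_full -/N -NZ.
  have N0' : N != 0 by rewrite gt_eqF.
  rewrite -NZ in N0'.
  field.
  by rewrite fact0 D0 N0'.
have HcR : N <= (2 ^ p.-1)%:R * N1.
  by rewrite /N /N1 -natr_sum -natrM ler_nat.
set c0 : R := (2 ^ p * p ^ p)%:R.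
have c0pos : 0 < c0 by rewrite ltr0n muln_gt0 !expn_gt0 (prime_gt0 pp).
set T : R := N / c0.
have Tpos : 0 < T by rewrite divr_gt0.
have e2 : ((2 ^ p)%:R : R) = 2 * (2 ^ p.-1)%:R.
  by rewrite -[in LHS](prednK (prime_gt0 pp)) expnS natrM.
have [c Pc Tc] : exists2 c : {ffun 'I_p -> F}, \sum_i c i == 0 & T <= diff c.
  case: (pselect (exists2 c : {ffun 'I_p -> F}, \sum_i c i == 0 & T <= diff c)) => // H; exfalso.
  have H' : forall c : {ffun 'I_p -> F}, \sum_i c i == 0 -> diff c <= T.
    move=> c Pc; rewrite leNgt; apply/negP => hlt; apply: H; exists c => //.
    by rewrite ltW.
  have : N1 <= T * (p ^ p)%:R.
    rewrite -Hsum; apply: (le_trans (ler_sum _ H')).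
    rewrite big_mkcond /=.
    apply: (@le_trans _ _ (\sum_(c : {ffun 'I_p -> F}) T)).
      by apply: ler_sum => c _; case: ifP => // _; rewrite ltW.
    by rewrite sumr_const card_ffun !card_ord ?(Fp_cast pp) mulr_natr.
  rewrite /T /c0 natrM e2 => h.
  have : N <= (2 ^ p.-1)%:R * (N / (2 * (2 ^ p.-1)%:R * (p ^ p)%:R) * (p ^ p)%:R).
    apply: (le_trans HcR); rewrite ler_wpM2l ?ler0n //.
  have p2 : ((2 ^ p.-1)%:R : R) != 0 by rewrite pnatr_eq0 expn_eq0.
  have pp2 : ((p ^ p)%:R : R) != 0 by rewrite pnatr_eq0 expn_eq0 negb_and -lt0n (prime_gt0 pp).
  have -> : (2 ^ p.-1)%:R * (N / (2 * (2 ^ p.-1)%:R * (p ^ p)%:R) * (p ^ p)%:R) = N / 2.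
    by field; rewrite p2 pp2.
  lra.
have nz : forall i, xs c i != 0.
  move=> i; apply/negP => /eqP h.
  have : diff c = 0 by rewrite /diff (AL_zero _ h) (AL_zero _ h) subrr.
  move=> d0; move: Tc; rewrite d0 => h2.
  by have := lt_le_trans Tpos h2; rewrite ltxx.
have prpos : 0 < \prod_(i < p) lr_norm p%:R (xs c i).
  by apply: prodr_gt0 => i _; exact: (norm_ind_gt0 pp (nz i)).
have prle : \prod_(i < p) lr_norm p%:R (xs c i) <= N.
  apply: prod_le => // i; rewrite ltW ?(norm_ind_gt0 pp (nz i)) //=.
  exact: norm_ind_le.
apply: le_trans; last exact: (lambda_ge D nz).
rewrite lee_fin -/c0 ler_pdivlMr //.
apply: (le_trans _ Tc); rewrite /T mulrC ler_wpM2r // invr_ge0 ltW //.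
Qed.

End A3.

Theorem theorem2p1 (R : realType) (p : nat) : prime p ->
  exists eps0 delta : R, 0 < eps0 /\ 0 < delta /\
  forall (n : nat), (p ^ 2 <= n)%N ->
  forall eps : R, eps < eps0 ->
  forall D : {ffun 'rV['F_p]_n -> nat}, (0 < ms_card D)%N ->
    (@lambdaK R p n (full_ms p n) D <= eps%:E)%E ->
    delta * n%:R ^+ (p - 1) <= (ms_card D)%:R.
Proof.
move=> pp.
have p1 : (1 < p)%N := prime_gt1 pp.
set r := p.-1.
have r0 : (0 < r)%N by rewrite /r; lia.
exists ((2 ^ p * p ^ p)%:R^-1), (((2 * r) ^ r)%:R^-1).
split; first by rewrite invr_gt0 ltr0n muln_gt0 !expn_gt0 (prime_gt0 pp).
split; first by rewrite invr_gt0 ltr0n expn_gt0 muln_gt0 r0.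
move=> n hn eps heps D hD hl.
set S := [set y : 'rV['F_p]_n | (0 < D y)%N].
have hSD : (#|S| <= ms_card D)%N.
  rewrite /ms_card (bigID (fun y => y \in S)) /= -sum1_card.
  apply: leq_trans (leq_addr _ _); apply: leq_sum => y; rewrite inE.
  by [].
case: (ltnP #|S| #|Kt p n|) => hK.
  exfalso.
  have [c [[k0 ck0] HS]] := exists_c pp hK.
  have Hc : (#|'rV['F_p]_n| <= 2 ^ p.-1 * \sum_z (Qf pp c z != 0%R))%N.
    have := @count_nonzero _ _ (Ak pp k0) (Qf pp c) (fun y => _).
    rewrite size_map size_enum_ord; apply => y.
    by rewrite Dl_Q.
  have HS' : forall y, (0 < D y)%N -> Qf pp c y = 0.
    by move=> y hy; apply: HS; rewrite inE.
  have h := key_lemma R pp hD (Q_AP pp c) HS' Hc.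
  have := le_trans h hl; rewrite lee_fin => h2.
  by have := lt_le_trans heps h2; rewrite ltxx.
have hKc : #|Kt p n| = ((n %/ r) ^ r)%N by rewrite card_ffun !card_ord.
have hpn : (p <= n)%N.
  by apply: leq_trans hn; rewrite -{1}(expn1 p) leq_pexp2l // ltnW.
have hm : (n <= 2 * r * (n %/ r))%N.
  have e := divn_eq n r; have lt := ltn_pmod n r0.
  have m1 : (0 < n %/ r)%N by rewrite divn_gt0 //; rewrite /r; lia.
  nia.
have hpow : (n ^ r <= (2 * r) ^ r * (n %/ r) ^ r)%N.
  by rewrite -expnMn leq_exp2r.
have h1 : ((n %/ r) ^ r <= ms_card D)%N by rewrite -hKc (leq_trans hK hSD).
rewrite subn1 -/r -natrX.
apply: (@le_trans _ _ ((n %/ r) ^ r)%:R); last by rewrite ler_nat.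
rewrite mulrC ler_pdivrMr ?ltr0n ?expn_gt0 ?muln_gt0 ?r0 // -natrM ler_nat mulnC.
exact: hpow.
Qed.
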